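(* Every pAND net is sub-sound.
   Context: Petri nets and markings. A Petri net is a triple $(P,T,F)$ with $P$ a finite set of places, $T$ a finite set of transitions, $P\cap T=\emptyset$, and $F\subseteq (P\times T)\cup(T\times P)$. For a node $x$, $\bullet x=\{y\mid (y,x)\in F\}$, $x\bullet=\{y\mid (x,y)\in F\}$. A marking is a multiset over $P$ (a function $P\to\mathbb N$); sets of places are identified with bags of multiplicity one, $+,-,\le$ are pointwise, and $k.m$ is the sum of $k$ copies of $m$. Transition $t$ is enabled at $m$ iff $\bullet t\le m$, firing gives $m-\bullet t+t\bullet$, and $m\xrightarrow{*}m'$ denotes reachability by a finite (possibly empty) firing sequence. A pWF net is $(P,T,F,I,O)$ with $(P,T,F)$ a Petri net, $I,O\subseteq P$ non-empty (input/output places), every node reachable by a directed path from some node of $I$, and some node of $O$ reachable from every node. AND nets. An AND net is an acyclic WF net $(P,T,F,I,O)$ such that for every place $p$: (1) either $p\in I$ and $|\bullet p|=0$, or $p\notin I$ and $|\bullet p|=1$; and (2) either $p\in O$ and $|p\bullet|=0$, or $p\notin O$ and $|p\bullet|=1$. A pAND net is an AND net that is a pWF net. Sub-soundness. A pWF net is sub-sound if for all integers $k\ge k'\ge 0$ and every marking $m'$: if $k.I\xrightarrow{*}m'+k'.O$ then $m'\xrightarrow{*}(k-k').O$. *)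

(* Defs.v *)
(* Petri nets with finite place type P and transition type T;
   the flow relation F is given by two boolean relations
   fpt : P -> T -> bool  ((p,t) \in F)  and  ftp : T -> P -> bool  ((t,p) \in F). *)
From mathcomp Require Import all_boot.
Set Implicit Arguments. Unset Strict Implicit. Unset Printing Implicit Defensive.

Section PetriNets.
Variables (P T : finType) (fpt : P -> T -> bool) (ftp : T -> P -> bool).

Definition node := (P + T)%type.

Definition flow : rel node := fun x y =>
  match x, y with
  | inl p, inr t => fpt p t
  | inr t, inl p => ftp t p
  | _, _ => false
  end.

Definition marking := {ffun P -> nat}.

Definition madd (m1 m2 : marking) : marking := [ffun p => m1 p + m2 p].
(* k.S for a set S of places (viewed as a bag of multiplicity one) *)
Definition mscale (k : nat) (S : {set P}) : marking := [ffun p => k * (p \in S)].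

Definition preT (t : T) : marking := [ffun p => nat_of_bool (fpt p t)].
Definition postT (t : T) : marking := [ffun p => nat_of_bool (ftp t p)].

Definition enabled (m : marking) (t : T) : Prop := forall p, preT t p <= m p.

Definition fire (m : marking) (t : T) : marking :=
  [ffun p => m p - preT t p + postT t p].

Inductive reach : marking -> marking -> Prop :=
  | reach_refl m : reach m m
  | reach_step m t m' : enabled m t -> reach (fire m t) m' -> reach m m'.

Definition preP (p : P) : {set T} := [set t | ftp t p].
Definition postP (p : P) : {set T} := [set t | fpt p t].

Definition pWF (I O : {set P}) : Prop :=
  [/\ I != set0, O != set0,
      (forall x : node, exists2 i, i \in I & connect flow (inl i) x) &
      (forall x : node, exists2 o, o \in O & connect flow x (inl o))].

Definition acyclic : Prop := forall x y : node, flow x y -> ~~ connect flow y x.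

Definition AND_net (I O : {set P}) : Prop :=
  [/\ acyclic,
      (forall p, ((p \in I) && (#|preP p| == 0)) || ((p \notin I) && (#|preP p| == 1))) &
      (forall p, ((p \in O) && (#|postP p| == 0)) || ((p \notin O) && (#|postP p| == 1)))].

Definition pAND_net (I O : {set P}) : Prop := AND_net I O /\ pWF I O.

Definition sub_sound (I O : {set P}) : Prop :=
  forall (k k' : nat) (m' : marking), k' <= k ->
    reach (mscale k I) (madd m' (mscale k' O)) ->
    reach m' (mscale (k - k') O).

End PetriNets.

(* Main.v *)
Require Import Defs.
From mathcomp Require Import all_boot zify.
Set Implicit Arguments. Unset Strict Implicit. Unset Printing Implicit Defensive.

Lemma sum_upd (T : finType) (c x : T -> nat) (t : T) :
  \sum_s c s * (x s + (s == t)) = \sum_s c s * x s + c t.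
Proof.
under eq_bigr do rewrite mulnDr.
rewrite big_split /=; congr (_ + _).
rewrite (bigD1 t) //= eqxx muln1 big1 ?addn0 // => s /negbTE ->; exact: muln0.
Qed.

Lemma sum_card (T : finType) (b : T -> bool) :
  \sum_s (b s : nat) = #|[set s | b s]|.
Proof.
rewrite -sum1_card [RHS]big_mkcond /=; apply: eq_bigr => s _; rewrite inE; by case: (b s).
Qed.

Lemma sum_const_r (T : finType) (c : T -> nat) k :
  \sum_s c s * k = k * \sum_s c s.
Proof. by rewrite -big_distrl /= mulnC. Qed.

Lemma sum_comp (T : finType) (c x : T -> nat) k : (forall s, x s <= k) ->
  \sum_s c s * (k - x s) + \sum_s c s * x s = k * \sum_s c s.
Proof.
move=> H; rewrite -big_split -sum_const_r; apply: eq_bigr => s _.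
simpl. rewrite -mulnDr subnK //.
Qed.

Lemma sum_ge (T : finType) (c : T -> nat) t : c t <= \sum_s c s.
Proof. by rewrite (bigD1 t) //= leq_addr. Qed.

Lemma state_eq (P T : finType) (fpt : P -> T -> bool) (ftp : T -> P -> bool) m m' :
  reach fpt ftp m m' -> exists x : T -> nat, forall p,
    m' p + \sum_s fpt p s * x s = m p + \sum_s ftp s p * x s.
Proof.
elim=> {m m'} [m | m t m' Hen _ [x Hx]].
  by exists (fun _ => 0) => p; rewrite !big1 // => s _; rewrite muln0.
exists (fun s => x s + (s == t)) => p.
rewrite !sum_upd; have := Hx p; rewrite ffunE; have := Hen p.
rewrite /preT /postT !ffunE.
by case: (fpt p t); case: (ftp t p) => /=; lia.
Qed.

Definition anc (P T : finType) (fpt : P -> T -> bool) (ftp : T -> P -> bool) (t : T)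
  : {set (P + T)%type} := [set v | connect (flow fpt ftp) v (inr t)].

Lemma anc_lt (P T : finType) (fpt : P -> T -> bool) (ftp : T -> P -> bool) s p t :
  acyclic fpt ftp -> ftp s p -> fpt p t -> #|anc fpt ftp s| < #|anc fpt ftp t|.
Proof.
move=> Hac Hsp Hpt; apply: proper_card; apply/properP; split.
  apply/subsetP => v; rewrite !inE => Hv.
  have H1 : connect (flow fpt ftp) (inr s) (inl p) by apply: connect1.
  have H2 : connect (flow fpt ftp) (inl p) (inr t) by apply: connect1.
  exact: (connect_trans Hv (connect_trans H1 H2)).
exists (inr t); first by rewrite inE connect0.
rewrite inE; apply/negP => Hts.
have Hf : flow fpt ftp (inr s) (inl p) by [].
have H2 : connect (flow fpt ftp) (inl p) (inr t) by apply: connect1.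
by have := Hac _ _ Hf; rewrite (connect_trans H2 Hts).
Qed.

Lemma anc_pos (P T : finType) (fpt : P -> T -> bool) (ftp : T -> P -> bool) t :
  0 < #|anc fpt ftp t|.
Proof. by apply/card_gt0P; exists (inr t); rewrite inE connect0. Qed.
Lemma haspre (P T : finType) (fpt : P -> T -> bool) (ftp : T -> P -> bool) (I O : {set P}) t :
  pWF fpt ftp I O -> exists p, fpt p t.
Proof.
case=> _ _ Hin _; have [i _ /connectP [q Hq Hl]] := Hin (inr t).
move: Hq Hl; case/lastP: q => [|q z] //=.
rewrite rcons_path last_rcons => /andP [_]; case: (last (inl i) q) => // p.
  by move=> Hf Hz; subst z; exists p.
by move=> Hf Hz; subst z.
Qed.

Lemma find_min (P T : finType) (fpt : P -> T -> bool) (ftp : T -> P -> bool) (y : T -> nat) :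
  acyclic fpt ftp -> forall n t, #|anc fpt ftp t| <= n -> 0 < y t ->
  exists t0, 0 < y t0 /\ forall s p, ftp s p -> fpt p t0 -> y s = 0.
Proof.
move=> Hac; elim=> [|n IH] t Hn Hy.
  by have := anc_pos fpt ftp t; rewrite leqNgt; move: Hn; rewrite leqn0 => /eqP ->.
have [Hall|] := boolP [forall s, forall p, (ftp s p && fpt p t) ==> (y s == 0)].
  exists t; split => // s p Hs Hp; apply/eqP.
  by move/forallP: Hall => /(_ s) /forallP /(_ p); rewrite Hs Hp.
rewrite negb_forall => /existsP [s]; rewrite negb_forall => /existsP [p].
rewrite negb_imply => /andP [/andP [Hs Hp] Hys].
apply: (IH s) => //; last by rewrite lt0n.
by rewrite -ltnS (leq_trans (anc_lt Hac Hs Hp)).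
Qed.

Lemma reachR (P T : finType) (fpt : P -> T -> bool) (ftp : T -> P -> bool) (m2 : marking P) :
  acyclic fpt ftp -> forall N (m : marking P) (y : T -> nat), \sum_t y t = N ->
  (forall p, m2 p + \sum_s fpt p s * y s = m p + \sum_s ftp s p * y s) ->
  reach fpt ftp m m2.
Proof.
move=> Hac; elim=> [|N IH] m y HN Heq.
  have y0 : forall s, y s = 0.
    by move=> s; apply/eqP; rewrite -leqn0 -HN (sum_ge y s).
  have -> : m = m2.
    apply/ffunP => p; have := Heq p.
    by rewrite !big1 ?addn0 // => s _; rewrite y0 muln0.
  exact: reach_refl.
have [t Ht] : exists t, 0 < y t.
  apply/existsP; apply: contraT; rewrite negb_exists => /forallP H.
  suff : \sum_t y t = 0 by rewrite HN.
  by apply: big1 => s _; have := H s; rewrite lt0n negbK => /eqP.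
have [t0 [Ht0 Hmin]] := find_min Hac (leqnn _) Ht.
set y1 := fun s => y s - (s == t0).
have Hy : forall s, y s = y1 s + (s == t0).
  by move=> s; rewrite /y1; case: eqP => [->|] /=; rewrite ?subn0 ?addn0 // subnK.
have Hen : enabled fpt m t0.
  move=> p; rewrite /preT ffunE; case Hp: (fpt p t0) => //=.
  have := Heq p; have := sum_ge (fun s => fpt p s * y s) t0.
  have B0 : \sum_s ftp s p * y s = 0.
    apply: big1 => s _; case Hs: (ftp s p) => //=; by rewrite (Hmin s p Hs Hp).
  rewrite B0 /= Hp mul1n; lia.
apply: (reach_step Hen); apply: (IH _ y1).
  have E1 : \sum_s ((s == t0) : nat) = 1.
    rewrite (bigD1 t0) //= eqxx big1 => [//|s /negbTE -> //].
  by move: HN; under eq_bigr do rewrite Hy; rewrite big_split /= E1; lia.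
move=> p; have := Heq p; under eq_bigr do rewrite Hy; under [X in _ = _ + X -> _]eq_bigr do rewrite Hy.
rewrite !sum_upd /fire ffunE /preT /postT !ffunE; have := Hen p; rewrite /preT ffunE.
by case: (fpt p t0); case: (ftp t0 p) => /=; lia.
Qed.

Theorem mainTheorem18 (P T : finType) (fpt : P -> T -> bool) (ftp : T -> P -> bool)
    (I O : {set P}) :
  pAND_net fpt ftp I O -> sub_sound fpt ftp I O.
Proof.
move=> [[Hac HI HO] Hwf] k k' m' hk Hr.
have [x Hx] := state_eq Hr.
have Hx' : forall p, m' p + k' * (p \in O) + \sum_s fpt p s * x s
                     = k * (p \in I) + \sum_s ftp s p * x s.
  by move=> p; have := Hx p; rewrite /madd /mscale !ffunE.
have xle : forall n t, #|anc fpt ftp t| <= n -> x t <= k.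
  elim=> [|n IH] t Hn.
    by have := anc_pos fpt ftp t; move: Hn; rewrite leqn0 => /eqP ->.
  have [p Hp] := haspre t Hwf.
  have H1 := sum_ge (fun s => fpt p s * x s) t; rewrite /= Hp mul1n in H1.
  have H2 : \sum_s ftp s p * x s <= \sum_s ftp s p * k.
    apply: leq_sum => s _; case Hs: (ftp s p) => //=; rewrite !mul1n.
    by apply: IH; rewrite -ltnS (leq_trans (anc_lt Hac Hs Hp)).
  rewrite sum_const_r sum_card in H2.
  move: H1 H2; have := Hx' p; have := HI p; rewrite /preP.
  by case: (p \in I) => /=; rewrite ?orbF => /eqP ->; lia.
have xk : forall s, x s <= k by move=> s; exact: (xle _ s (leqnn _)).
apply: (reachR Hac (N := \sum_t (k - x t)) (y := fun s => k - x s) (erefl _)) => p.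
have C1 := sum_comp (fpt p) xk; have C2 := sum_comp (ftp ^~ p) xk.
rewrite /= !sum_card in C1 C2.
move: C1 C2; have := Hx' p; have := HI p; have := HO p; rewrite /preP /postP /mscale ffunE.
by case: (p \in I); case: (p \in O); rewrite /= ?orbF => /eqP -> /eqP ->; lia.
Qed.
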